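(* Let $x_1,x_2,\dots,y_1,y_2,\dots$ be indeterminates and $$F(q)=\sum_{d\ge0}\ \sum_{0=d_0<d_1<\dots<d_r=d}\frac{\prod_{i=1}^r\left(y_{d_i-d_{i-1}}+x_{d_i-d_{i-1}}d_{i-1}\right)}{r!}q^d\in\mathbb Q[x_k,y_k]_{k\ge1}[[q]]$$ (the $d=0$ term being $1$, from $r=0$). Then every coefficient of $q^d$ in $\log F(q)$ is a polynomial of degree at most one in the variables $y_1,y_2,\dots$. *)

(* Defs.v *)
From HB Require Import structures.
From mathcomp Require Import all_boot all_order all_algebra.
From mathcomp Require Import mpoly.
Set Implicit Arguments. Unset Strict Implicit. Unset Printing Implicit Defensive.
Import Order.TTheory GRing.Theory Num.Theory.
Local Open Scope ring_scope.

(* Truncated coefficient ring: Q[x_1..x_{n+1}, y_1..y_{n+1}].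
   Variables 0..n of the first block are x_1..x_{n+1},
   variables 0..n of the second block are y_1..y_{n+1}. *)
Definition Rn (n : nat) := {mpoly rat[n.+1 + n.+1]}.

Definition xv (n k : nat) : Rn n := 'X_(lshift n.+1 (inord k.-1 : 'I_n.+1)).
Definition yv (n k : nat) : Rn n := 'X_(rshift n.+1 (inord k.-1 : 'I_n.+1)).

(* Coefficient of q^d in F(q): sum over r and over compositions
   (a_1,...,a_r) of d into positive parts (a_i = d_i - d_{i-1}),
   of prod_i (y_{a_i} + x_{a_i} d_{i-1}) / r!, with d_{i-1} = sum_{j<i} a_j. *)
Definition Fcoef (n d : nat) : Rn n :=
  \sum_(r < d.+1)
    \sum_(a : {ffun 'I_r -> 'I_d.+1} |
            [forall i, (0 < (a i : nat))%N] && ((\sum_(i < r) (a i : nat))%N == d))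
      ((r`!)%:R^-1 : rat) *:
        \prod_(i < r)
          (yv n (a i) + xv n (a i) * ((\sum_(j < r | (j < i)%N) (a j : nat))%N)%:R).

Definition Ftrunc (n N : nat) : {poly Rn n} := \poly_(i < N.+1) Fcoef n i.

(* Coefficient of q^d in log F(q) = sum_{m>=1} (-1)^(m+1) (F-1)^m / m.
   Since F - 1 has zero constant term, only m <= d contribute to q^d,
   and only coefficients of F of degree <= d matter. *)
Definition logFcoef (n d : nat) : Rn n :=
  \sum_(1 <= m < d.+1)
    (((-1) ^+ m.+1 / m%:R : rat) *: ((Ftrunc n d - 1) ^+ m)`_d).

Definition ydeg_le1 (n : nat) (p : Rn n) : Prop :=
  forall m, m \in msupp p -> (\sum_(i < n.+1) m (rshift n.+1 i) <= 1)%N.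

(* Main.v *)
Require Import Defs.
From HB Require Import structures.
From mathcomp Require Import all_boot all_order all_algebra.
From mathcomp Require Import mpoly.
Set Implicit Arguments. Unset Strict Implicit. Unset Printing Implicit Defensive.
Import Order.TTheory GRing.Theory Num.Theory.
Local Open Scope ring_scope.

Section Ydeg.
Variable n : nat.
Local Notation R := (Rn n).

Definition ydg (m : 'X_{1..n.+1 + n.+1}) := (\sum_(i < n.+1) m (rshift n.+1 i))%N.
Definition yle k (p : R) := forall m, m \in msupp p -> (ydg m <= k)%N.

Lemma yle0 k : yle k 0.
Proof. by move=> m; rewrite msupp0. Qed.

Lemma yleD k p q : yle k p -> yle k q -> yle k (p + q).
Proof. by move=> hp hq m /msuppD_le; rewrite mem_cat => /orP[/hp|/hq]. Qed.

Lemma yle_sum k I (r : seq I) (P : pred I) (F : I -> R) :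
  (forall i, P i -> yle k (F i)) -> yle k (\sum_(i <- r | P i) F i).
Proof.
move=> h; elim/big_rec: _ => [|i x Pi hx]; first exact: yle0.
exact: yleD (h _ Pi) hx.
Qed.

Lemma yleZ k (c : rat) p : yle k p -> yle k (c *: p).
Proof. by move=> h m /msuppZ_le /h. Qed.

Lemma yleN k p : yle k p -> yle k (- p).
Proof. by move=> h; rewrite -scaleN1r; apply: yleZ. Qed.

Lemma yleMn k p j : yle k p -> yle k (p *+ j).
Proof. by move=> h; elim: j => [|j ih]; [rewrite mulr0n; apply: yle0|rewrite mulrS; apply: yleD]. Qed.

Lemma yle_mono k k' p : (k <= k')%N -> yle k p -> yle k' p.
Proof. by move=> hk h m /h /leq_trans; apply. Qed.

Lemma ydgD m1 m2 : ydg (m1 + m2)%MM = (ydg m1 + ydg m2)%N.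
Proof. by rewrite /ydg -big_split; apply: eq_bigr => i _; rewrite mnmDE. Qed.

Lemma yleM a b p q : yle a p -> yle b q -> yle (a + b) (p * q).
Proof.
move=> hp hq m /msuppM_le /allpairsP [[m1 m2] /= [h1 h2 ->]].
by rewrite ydgD leq_add ?hp ?hq.
Qed.

Lemma yle_xv k : yle 0 (xv n k).
Proof.
move=> m; rewrite /xv msuppX mem_seq1 => /eqP ->.
rewrite /ydg big1 // => i _; rewrite mnm1E.
apply/eqP; rewrite eqb0; apply/eqP => /(congr1 val) /=.
by case: (inord _) => /= x hx; case: i => /= i _ E; move: hx; rewrite E ltnNge leq_addr.
Qed.

Lemma yle_yv k : yle 1 (yv n k).
Proof.
move=> m; rewrite /yv msuppX mem_seq1 => /eqP ->.
rewrite /ydg (bigD1 (inord k.-1)) //= mnm1E eqxx big1 // => i ne.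
rewrite mnm1E; apply/eqP; rewrite eqb0; apply/negP=> /eqP /rshift_inj E.
by rewrite E eqxx in ne.
Qed.

End Ydeg.

From mathcomp Require Import zify.

Section Comb.
Variable n : nat.
Local Notation R := (Rn n).

Definition fac (j s : nat) : R := yv n j + xv n j * s%:R.
Definition Cnd r K (a : {ffun 'I_r -> 'I_K}) d :=
  [forall i, (0 < a i)%N] && ((\sum_(i < r) (a i : nat))%N == d).
Definition Pr r K (a : {ffun 'I_r -> 'I_K}) :=
  \prod_(i < r) fac (a i) (\sum_(j < r | (j < i)%N) (a j : nat))%N.
Definition TK r d K := \sum_(a : {ffun 'I_r -> 'I_K} | Cnd a d) Pr a.
Definition T r d := TK r d d.+1.

Lemma CndE r K K' (a : {ffun 'I_r -> 'I_K}) (b : {ffun 'I_r -> 'I_K'}) d :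
  (forall i, (a i : nat) = b i) -> Cnd a d = Cnd b d.
Proof.
move=> h; rewrite /Cnd; congr andb; first by apply: eq_forallb => i; rewrite h.
by congr eq_op; apply: eq_bigr => i _; rewrite h.
Qed.

Lemma PrE r K K' (a : {ffun 'I_r -> 'I_K}) (b : {ffun 'I_r -> 'I_K'}) :
  (forall i, (a i : nat) = b i) -> Pr a = Pr b.
Proof.
move=> h; rewrite /Pr; apply: eq_bigr => i _; rewrite h; congr fac.
by apply: eq_bigr => j _; rewrite h.
Qed.

Lemma Cnd_le r K (a : {ffun 'I_r -> 'I_K}) d i : Cnd a d -> (a i <= d)%N.
Proof.
case/andP=> _ /eqP <-; rewrite (bigD1 i) //=; exact: leq_addr.
Qed.

Lemma TK_ind r d K : (d < K)%N -> TK r d K = T r d.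
Proof.
move=> hK; rewrite /T /TK.
pose h (a : {ffun 'I_r -> 'I_d.+1}) : {ffun 'I_r -> 'I_K} :=
  [ffun i => widen_ord hK (a i)].
pose h' (b : {ffun 'I_r -> 'I_K}) : {ffun 'I_r -> 'I_d.+1} := [ffun i => inord (b i)].
rewrite (reindex_onto h h') /=; last first.
  move=> b hb; apply/ffunP => i; rewrite !ffunE; apply: val_inj => /=.
  by rewrite inordK // ltnS (Cnd_le i hb).
have hh : forall a i, (h a i : nat) = a i by move=> a i; rewrite ffunE.
apply: eq_big => [a|a _]; last exact: PrE.
rewrite (CndE _ (hh a)); case: (Cnd a d); rewrite ?andbF ?andbT //.
apply/eqP/ffunP => i; rewrite !ffunE; apply: val_inj => /=.
by rewrite inordK.
Qed.

Definition ext r K (p : 'I_K * {ffun 'I_r -> 'I_K}) : {ffun 'I_r.+1 -> 'I_K} :=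
  [ffun i => if unlift ord_max i is Some j then p.2 j else p.1].

Lemma ext_max r K p : @ext r K p ord_max = p.1.
Proof. by rewrite ffunE unlift_none. Qed.

Lemma ext_w r K p (i : 'I_r) : @ext r K p (widen_ord (leqnSn r) i) = p.2 i.
Proof.
have -> : widen_ord (leqnSn r) i = lift ord_max i by apply: val_inj; rewrite /= /bump leqNgt ltn_ord.
by rewrite ffunE liftK.
Qed.

Lemma ext_bij r K : bijective (@ext r K).
Proof.
exists (fun a : {ffun 'I_r.+1 -> 'I_K} =>
  ((a ord_max, [ffun i : 'I_r => a (lift ord_max i)]) : 'I_K * {ffun 'I_r -> 'I_K})).
  case=> t b /=; rewrite ext_max; congr pair.
  by apply/ffunP => i; rewrite !ffunE liftK.
move=> a; apply/ffunP => i; rewrite ffunE /=.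
by case: unliftP => [j ->|->]; rewrite ?ffunE.
Qed.

Lemma ext_pre r K p (i0 : nat) : (i0 <= r)%N ->
  (\sum_(j < r.+1 | (j < i0)%N) (@ext r K p j : nat))%N =
  (\sum_(j < r | (j < i0)%N) (p.2 j : nat))%N.
Proof.
move=> hi; rewrite big_mkcond big_ord_recr /= ltnNge hi addn0 [RHS]big_mkcond.
by apply: eq_bigr => j _; rewrite ext_w.
Qed.

Lemma TK_rec r d K : TK r.+1 d K =
  \sum_(t < K | (0 < t)%N && (t <= d)%N) fac t (d - t)%N * TK r (d - t)%N K.
Proof.
rewrite /TK (reindex (@ext r K)); last exact/onW_bij/ext_bij.
under [RHS]eq_bigr do rewrite mulr_sumr.
rewrite pair_big_dep; apply: eq_big => [[t b]|[t b]] /=.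
  rewrite /Cnd big_ord_recr /= ext_max.
  have -> : [forall i, (0 < ext (t, b) i)%N] = (0 < t)%N && [forall i, (0 < b i)%N].
    apply/forallP/andP => [h|[h1 /forallP h2] i].
      split; first by have := h ord_max; rewrite ext_max.
      by apply/forallP => i; have := h (widen_ord (leqnSn r) i); rewrite ext_w.
    by case: (unliftP ord_max i) => [j ->|->]; rewrite ffunE ?liftK ?unlift_none.
  have -> : (\sum_(i < r) (ext (t, b) (widen_ord (leqnSn r) i) : nat))%N =
            (\sum_(i < r) (b i : nat))%N by apply: eq_bigr => i _; rewrite ext_w.
  have E : ((\sum_(i < r) (b i : nat))%N + t == d) =
           (t <= d)%N && ((\sum_(i < r) (b i : nat))%N == d - t)%N.
    apply/idP/idP; first by move/eqP => E; apply/andP; split; [lia| apply/eqP; lia].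
    by case/andP => h /eqP E; apply/eqP; lia.
  by rewrite E -!andbA; congr andb; rewrite !andbA; congr andb; rewrite andbC.
rewrite /Cnd => /andP [_ /eqP]; rewrite big_ord_recr /= ext_max.
under eq_bigr do rewrite ext_w.
move=> hs.
rewrite /Pr big_ord_recr /= ext_max mulrC; congr (_ * _).
  congr fac; rewrite (ext_pre (t, b) (leqnn r)) (eq_bigl xpredT) /=; last by move=> j; rewrite ltn_ord.
  by move: hs => /= <-; rewrite addnK.
apply: eq_bigr => i _; rewrite ext_w ext_pre //; exact: ltnW.
Qed.

Lemma T_rec r d : T r.+1 d =
  \sum_(t < d.+1 | (0 < t)%N) fac t (d - t)%N * T r (d - t)%N.
Proof.
rewrite {1}/T TK_rec; apply: eq_big => [t|t _]; first by have := ltn_ord t; rewrite ltnS => ->; rewrite andbT.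
by rewrite TK_ind // ltnS leq_subr.
Qed.

Lemma T0 d : T 0 d = (d == 0)%:R.
Proof.
rewrite /T /TK.
have a0 : {ffun 'I_0 -> 'I_d.+1} := [ffun i => ord0].
rewrite (eq_bigl (fun a => (d == 0))); last first.
  by move=> a; rewrite /Cnd big_ord0 eq_sym; have -> : [forall i : 'I_0, (0 < a i)%N] by apply/forallP => [[]].
case: (d == 0); last by rewrite big_pred0.
rewrite (eq_bigr (fun _ => 1)); last by move=> a _; rewrite /Pr big_ord0.
by rewrite sumr_const card_ffun !card_ord.
Qed.

Lemma Tbig r d : (d < r)%N -> T r d = 0.
Proof.
move=> h; rewrite /T /TK big_pred0 // => a; apply/negP => /andP [/forallP hp /eqP hs].
have : (\sum_(i < r) 1 <= \sum_(i < r) (a i : nat))%N by apply: leq_sum => i _; exact: hp.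
by rewrite sum1_card card_ord hs leqNgt h.
Qed.

Lemma Fcoef_T d : Fcoef n d = \sum_(r < d.+1) ((r`!)%:R^-1 : rat) *: T r d.
Proof. by apply: eq_bigr => r _; rewrite /T /TK scaler_sumr. Qed.

End Comb.

From mathcomp Require Import ring.
Section Ser.
Variable n : nat.
Local Notation R := (Rn n).
Local Notation S := {poly R}.
Local Notation P := {poly S}.

Definition vz k (p : P) := forall i, (i < k)%N -> p`_i = 0.

Lemma vz0 k : vz k 0.
Proof. by move=> i _; rewrite coef0. Qed.

Lemma vzD k p q : vz k p -> vz k q -> vz k (p + q).
Proof. by move=> hp hq i hi; rewrite coefD hp ?hq ?addr0. Qed.

Lemma vzN k p : vz k p -> vz k (- p).
Proof. by move=> hp i hi; rewrite coefN hp ?oppr0. Qed.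

Lemma vzB k p q : vz k p -> vz k q -> vz k (p - q).
Proof. by move=> hp hq; apply: vzD => //; apply: vzN. Qed.

Lemma vzM a b p q : vz a p -> vz b q -> vz (a + b) (p * q).
Proof.
move=> hp hq i hi; rewrite coefM big1 // => j _.
have [hj|hj] := ltnP j a; first by rewrite hp ?mul0r.
by rewrite hq ?mulr0 //; have := ltn_ord j; lia.
Qed.

Lemma vzMl k s p : vz k p -> vz k (s * p).
Proof. by move=> hp; rewrite -[k]add0n; apply: vzM => // i. Qed.

Lemma vzMr k s p : vz k p -> vz k (p * s).
Proof. by move=> hp; rewrite mulrC; apply: vzMl. Qed.

Lemma vzX u k : vz 1 u -> vz k (u ^+ k).
Proof.
move=> hu; elim: k => [|k ih]; first by move=> i.
by rewrite exprSr -addn1; apply: vzM.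
Qed.

Lemma sumgeo k (u : P) : (\sum_(i < k) (- u) ^+ i) * (1 + u) = 1 - (- u) ^+ k.
Proof.
rewrite (_ : 1 - _ = - ((- u) ^+ k - 1)); last by rewrite opprB.
by rewrite subrX1 -mulNr opprB opprK mulrC.
Qed.

Lemma vz_inv k u H : vz 1 u -> vz k (H * (1 + u)) -> vz k H.
Proof.
move=> hu hH.
have E : H = H * (1 + u) * (\sum_(i < k) (- u) ^+ i) + H * (- u) ^+ k.
  by rewrite -mulrA [_ * \sum_(i < k) _]mulrC sumgeo mulrBr mulr1 subrK.
rewrite E; apply: vzD; first exact: vzMr.
by apply: vzMl; apply: vzX; apply: vzN.
Qed.

Fact sc_key : unit. Proof. exact: tt. Qed.
Definition sc : rat -> P := locked_with sc_key (fun c : rat => ((GRing.in_alg R c)%:P)%:P).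
Lemma scE c : sc c = ((GRing.in_alg R c)%:P)%:P.
Proof. by rewrite /sc unlock. Qed.

Lemma scMn c k : sc c *+ k = sc (c *+ k).
Proof. by rewrite !scE -!polyCMn /= scalerMnl. Qed.

Lemma scXN1 k : sc ((-1) ^+ k) = (-1) ^+ k.
Proof.
have h : GRing.in_alg R ((-1) ^+ k) = (-1) ^+ k by rewrite rmorphXn rmorphN1.
by rewrite scE h !polyC_exp !polyCN.
Qed.

Lemma sc1 : sc 1 = 1.
Proof. by rewrite scE /= scale1r. Qed.

Definition cf (m : nat) : rat := (-1) ^+ m.+1 / m%:R.

Definition Lg N (u : P) := \sum_(1 <= m < N.+1) sc (cf m) * u ^+ m.

Section Der.
Variable dl : P -> P.
Hypothesis hD : forall a b, dl (a + b) = dl a + dl b.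
Hypothesis hM : forall a b, dl (a * b) = dl a * b + a * dl b.
Hypothesis hC : forall c, dl (sc c) = 0.

Lemma dl0 : dl 0 = 0.
Proof. have h := hD 0 0; rewrite addr0 in h; apply: (addrI (dl 0)); by rewrite addr0 -h. Qed.

Lemma dlN a : dl (- a) = - dl a.
Proof. by apply/eqP; rewrite -addr_eq0 -hD addNr dl0. Qed.

Lemma dl_sum I (r : seq I) (Pr : pred I) (F : I -> P) :
  dl (\sum_(i <- r | Pr i) F i) = \sum_(i <- r | Pr i) dl (F i).
Proof. by elim/big_rec2: _ => [|i y x _ <-]; rewrite ?dl0 ?hD. Qed.

Lemma dl1 : dl 1 = 0.
Proof. by rewrite -sc1 hC. Qed.

Lemma dlX u m : dl (u ^+ m.+1) = u ^+ m * dl u *+ m.+1.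
Proof.
elim: m => [|m ih]; first by rewrite expr1 expr0 mul1r.
rewrite exprS hM ih mulrnAr mulrA -exprS [RHS]mulrS; congr (_ + _).
by rewrite mulrC.
Qed.

Lemma cfE i : cf i.+1 *+ i.+1 = (-1) ^+ i.
Proof. by rewrite /cf -[_ *+ i.+1]mulr_natr divfK ?pnatr_eq0 // !exprS !mulN1r opprK. Qed.

Lemma dlsc c x : dl (sc c * x) = sc c * dl x.
Proof. rewrite hM; have -> : dl (sc c) * x = 0 by rewrite (hC c) mul0r.
exact: add0r. Qed.

Lemma logder N u : dl (Lg N u) * (1 + u) = dl u - (- u) ^+ N * dl u.
Proof.
rewrite /Lg dl_sum big_add1 big_mkord.
rewrite (eq_bigr (fun i : 'I_N => (- u) ^+ i * dl u)); last first.
  move=> i _; rewrite dlsc dlX mulrnAr -mulrnAl scMn cfE scXN1.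
  by rewrite mulrA -exprNn.
rewrite -mulr_suml mulrAC sumgeo.
by rewrite mulrBl mul1r.
Qed.
End Der.

End Ser.


Lemma alg_id (A : comNzRingType) (a b c d e f g : A) :
  (a - (b + c * d)) * e = (a * e - f) + (f - (b * e + c * g)) - c * (d * e - g).
Proof. ring. Qed.

Section Main.
Variable n : nat.
Local Notation R := (Rn n).
Local Notation S := {poly R}.
Local Notation P := {poly S}.

Definition dt (p : P) : P := map_poly (@deriv R) p.
Definition dq (p : P) : P := 'X * p^`().

Lemma dtD a b : dt (a + b) = dt a + dt b.
Proof. apply/polyP => i; rewrite coefD !coef_map /= coefD; exact: derivD. Qed.

Lemma dtM a b : dt (a * b) = dt a * b + a * dt b.
Proof.
apply/polyP => i; rewrite coef_map /= coefD !coefM raddf_sum -big_split /=.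
by apply: eq_bigr => j _; rewrite derivM !coef_map.
Qed.

Lemma dtC c : dt (sc n c) = 0.
Proof. by rewrite /dt scE map_polyC /= derivC. Qed.

Lemma dqD a b : dq (a + b) = dq a + dq b.
Proof. by rewrite /dq derivD mulrDr. Qed.

Lemma dqM a b : dq (a * b) = dq a * b + a * dq b.
Proof. by rewrite /dq derivM mulrDr mulrA [a * ('X * _)]mulrCA !mulrA [_ * a]mulrC. Qed.

Lemma dqC c : dq (sc n c) = 0.
Proof. by rewrite /dq scE derivC mulr0. Qed.

Lemma dq_coef p k : (dq p)`_k = p`_k *+ k.
Proof. by rewrite /dq coefXM; case: k => [|k]; rewrite ?mulr0n /= ?coef_deriv. Qed.
Definition Fi d : S := \poly_(r < d.+1) (((r`!)%:R^-1 : rat) *: T n r d).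

Lemma Fi_coef d r : (Fi d)`_r = ((r`!)%:R^-1 : rat) *: T n r d.
Proof.
rewrite coef_poly; case: ltnP => // h.
by rewrite Tbig ?scaler0.
Qed.

Lemma Fi0 : Fi 0 = 1.
Proof.
apply/polyP => i; rewrite Fi_coef coef1; case: i => [|i].
  by rewrite T0 /= scale1r.
by rewrite Tbig ?scaler0.
Qed.

Variable N : nat.

Definition Fs : P := \poly_(d < N.+1) Fi d.
Definition ya a : R := if a == 0%N then 0 else yv n a.
Definition xa a : R := if a == 0%N then 0 else xv n a.
Definition Ys : P := \poly_(a < N.+1) (ya a)%:P.
Definition Xs : P := \poly_(a < N.+1) (xa a)%:P.

Lemma fact_lem r : ((r.+1)%:R * ((r.+1)`!)%:R^-1 : rat) = (r`!)%:R^-1.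
Proof. by rewrite factS natrM invfM mulrA mulfV ?mul1r // pnatr_eq0. Qed.

Lemma main_eq : vz N.+1 (dt Fs - (Ys * Fs + Xs * dq Fs)).
Proof.
move=> d hd; apply/eqP; rewrite coefB subr_eq0; apply/eqP/polyP => r.
have hF : forall k, (k < N.+1)%N -> Fs`_k = Fi k by move=> k hk; rewrite coef_poly hk.
rewrite coef_map hF // coef_deriv Fi_coef.
rewrite coefD !coefM coefD !coef_sum -big_split /=.
rewrite -scaler_nat scalerA fact_lem.
rewrite T_rec scaler_sumr big_mkcond /=; apply: eq_bigr => j _.
have hj : (j < N.+1)%N by have := ltn_ord j; lia.
have hdj : (d - j < N.+1)%N by lia.
rewrite dq_coef hF // /Ys /Xs !coef_poly hj !coefCM coefMn Fi_coef.
rewrite /ya /xa; case: eqP => [->|/eqP hj0] /=; first by rewrite !mul0r addr0.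
rewrite lt0n hj0 /fac mulrDl scalerDr; congr (_ + _); first by rewrite scalerAr.
by rewrite mulrnAr mulr1 mulrnAl [RHS]mulrnAr -scalerAr scalerMnr.
Qed.
End Main.


Section Fin.
Variable n N : nat.
Local Notation R := (Rn n).
Local Notation S := {poly R}.
Local Notation P := {poly S}.

Definition uu : P := Fs n N - 1.
Definition GG : P := Lg N uu.

Lemma Fs_eq : 1 + uu = Fs n N.
Proof. by rewrite /uu addrC subrK. Qed.

Lemma uu0 : vz 1 uu.
Proof.
move=> i; rewrite ltnS leqn0 => /eqP ->.
by rewrite /uu coefB coef_poly /= Fi0 coef1 subrr.
Qed.

Lemma dt_uu : dt uu = dt (Fs n N).
Proof.
by rewrite /uu dtD (dlN (@dtD n)) (dl1 (@dtC n)) oppr0 addr0.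
Qed.

Lemma dq_uu : dq uu = dq (Fs n N).
Proof. by rewrite /uu dqD (dlN (@dqD n)) (dl1 (@dqC n)) oppr0 addr0. Qed.

Lemma H1 : vz N.+1 (dt GG * Fs n N - dt (Fs n N)).
Proof.
have := logder (@dtD n) (@dtM n) (@dtC n) N uu.
rewrite Fs_eq -/GG dt_uu => ->; rewrite addrAC subrr add0r -addn1.
apply/vzN/vzM; first by apply: vzX; apply: vzN; apply: uu0.
move=> i; rewrite ltnS leqn0 => /eqP ->.
by rewrite -dt_uu /dt coef_map (uu0 (ltn0Sn 0)) raddf0.
Qed.

Lemma H2 : vz N.+1 (dq GG * Fs n N - dq (Fs n N)).
Proof.
have := logder (@dqD n) (@dqM n) (@dqC n) N uu.
rewrite Fs_eq -/GG dq_uu => ->; rewrite addrAC subrr add0r -addn1.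
apply/vzN/vzM; first by apply: vzX; apply: vzN; apply: uu0.
move=> i; rewrite ltnS leqn0 => /eqP ->.
by rewrite dq_coef mulr0n.
Qed.

Lemma Heq : vz N.+1 (dt GG - (Ys n N + Xs n N * dq GG)).
Proof.
apply: (vz_inv uu0); rewrite Fs_eq.
rewrite (alg_id _ _ _ _ _ (dt (Fs n N)) (dq (Fs n N))).
apply: vzB; last by apply: vzMl; apply: H2.
apply: vzD; first exact: H1.
exact: main_eq.
Qed.


Definition Z0 (p : P) := forall k, p`_k`_0 = 0.

Lemma Z0D p q : Z0 p -> Z0 q -> Z0 (p + q).
Proof. by move=> hp hq k; rewrite !coefD hp hq addr0. Qed.

Lemma Z0M a p : Z0 p -> Z0 (a * p).
Proof.
move=> hp k; rewrite coefM coef_sum big1 // => j _.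
by rewrite coef0M hp mulr0.
Qed.

Lemma Z0uu : Z0 uu.
Proof.
move=> k; rewrite /uu coefB coefB coef_poly; case: k => [|k] /=.
  by rewrite Fi0 !coef1 subrr.
rewrite coef1 /= mulr0n coef0 subr0; case: ifP => _; last by rewrite coef0.
by rewrite Fi_coef T0 /= scaler0.
Qed.

Lemma Z0GG : Z0 GG.
Proof.
rewrite /GG /Lg big_add1 /=; elim/big_rec: _ => [|m x _ hx].
  by move=> k; rewrite !coef0.
apply: Z0D => //; rewrite exprSr mulrA; exact: Z0M Z0uu.
Qed.

Lemma GG_rec d r : (d < N.+1)%N ->
  GG`_d`_r.+1 *+ r.+1 =
  (ya n d)%:P`_r + \sum_(j < d.+1) xa n j * (GG`_(d - j)`_r *+ (d - j)).
Proof.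
move=> hd; have := Heq hd; rewrite coefB => /eqP; rewrite subr_eq0 => /eqP E.
have := congr1 (fun p : S => p`_r) E; rewrite coef_map /= coef_deriv => ->.
rewrite coefD coef_poly hd coefM coefD coef_sum; congr (_ + _); apply: eq_bigr => j _.
have hj : (j < N.+1)%N by have := ltn_ord j; lia.
by rewrite coef_poly hj coefCM dq_coef coefMn.
Qed.

Lemma yGG r : forall d, (d < N.+1)%N -> yle 1 (GG`_d`_r).
Proof.
elim: r => [|r ih] d hd; first by rewrite Z0GG; apply: yle0.
have E := GG_rec r hd.
have -> : GG`_d`_r.+1 = ((r.+1)%:R^-1 : rat) *: ((ya n d)%:P`_r +
    \sum_(j < d.+1) xa n j * (GG`_(d - j)`_r *+ (d - j))).
  by rewrite -E -scaler_nat scalerA mulVf ?scale1r // pnatr_eq0.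
apply: yleZ; apply: yleD.
  rewrite coefC; case: (r == 0%N); last exact: yle0.
  rewrite /ya; case: (d == 0%N); [exact: yle0 | exact: yle_yv].
apply: yle_sum => j _; rewrite -[1%N]/(0 + 1)%N; apply: yleM.
  rewrite /xa; case: (nat_of_ord j == 0%N); [exact: yle0 | exact: yle_xv].
by apply: yleMn; apply: ih; lia.
Qed.

Lemma evF : map_poly (horner_eval (1 : R)) (Fs n N) = Ftrunc n N.
Proof.
apply/polyP => k; rewrite coef_map !coef_poly; case: ifP => _; last exact: raddf0.
rewrite (_ : _ (Fi n k) = (Fi n k).[1]) // horner_poly Fcoef_T; apply: eq_bigr => r _.
by rewrite expr1n mulr1.
Qed.

Lemma logF : logFcoef n N = (map_poly (horner_eval (1 : R)) GG)`_N.
Proof.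
rewrite /GG /Lg rmorph_sum coef_sum; apply: eq_bigr => m _.
rewrite rmorphM rmorphXn /uu rmorphB rmorph1 /= evF scE map_polyC /=.
by rewrite coefCM /horner_eval hornerC mulr_algl.
Qed.

End Fin.

Theorem proposition8p1 (n d : nat) :
  (d <= n.+1)%N -> ydeg_le1 (logFcoef n d).
Proof.
move=> _; rewrite logF coef_map /= /horner_eval horner_coef.
apply: yle_sum => i _; rewrite expr1n mulr1; exact: yGG.
Qed.
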